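(* Fix $N\ge 1$, positive real weights $\omega_1,\dots,\omega_N$, a complex vector $\bm{\alpha}=(\alpha_1,\dots,\alpha_N)\in\mathbb{C}^N$, and an integer $n\ge 1$. Let $\rho_{\bm a}$ be a state (density operator) on the signal modes $\bm a$ such that the expectations $\operatorname{tr}(\rho_{\bm a}\,M)$ are well-defined and finite for every polynomial $M$ of degree at most $n$ in the operators $\hat a_k,\hat a_k^\dagger$ ($k=1,\dots,N$). Let the joint state of signal and LO modes be $\rho=\rho_{\bm a}\otimes \bm 0_{\bm b}$. Then, as $\delta\to 0^+$, $$\langle \hat q_\delta^{\,n}\rangle_\rho=\langle \hat q^{\,n}\rangle_\rho+O(\delta^2),$$ where the constant implicit in $O(\delta^2)$ depends on $\rho_{\bm a}$ (and on $n$, $\bm\alpha$, $\bm\omega$) but not on $\delta$.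
   Context: Modes: $\hat a_1,\dots,\hat a_N$ (signal modes $\bm a$) and $\hat b_1,\dots,\hat b_N$ (local-oscillator modes $\bm b$, taken before the LO displacement) are $2N$ mutually orthogonal bosonic modes: $[\hat a_k,\hat a_l^\dagger]=[\hat b_k,\hat b_l^\dagger]=\delta_{kl}$, all other commutators between annihilation/creation operators vanish. The joint Hilbert space is the tensor product of the Fock spaces of the signal modes and LO modes; $\bm 0_{\bm b}$ denotes the vacuum state (density operator) of all LO modes. The target quadrature is $\hat q=\hat q_{\bm a,\bm\alpha}=\sum_{k=1}^N -i(\alpha_k\hat a_k^\dagger-\alpha_k^*\hat a_k)$ (acting on the signal modes). For $\delta>0$, set $\beta_k=-i\alpha_k/\omega_k$ and define the outgoing modes $\hat c_k=\frac1{\sqrt2}(\hat a_k+\hat b_k+\beta_k/\delta)$, $\hat d_k=\frac1{\sqrt2}(\hat a_k-\hat b_k-\beta_k/\delta)$. The broadband pulsed (BBP) homodyne measurement operator is the self-adjoint operator $\hat q_\delta=\delta\sum_{k=1}^N\omega_k(\hat c_k^\dagger\hat c_k-\hat d_k^\dagger\hat d_k)$ (a scaled difference of two commuting weighted total-photon-number/energy operators), which equals $\hat q+\delta\sum_{k=1}^N\omega_k(\hat a_k^\dagger\hat b_k+\hat b_k^\dagger\hat a_k)$. Also $\hat q_0:=\hat q$. $\langle X\rangle_\rho=\operatorname{tr}(\rho X)$. *)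

(* Defs.v *)
(* Bosonic modes are modelled by the Fock (number)
   representation: operators act on finite linear combinations of number states
   (the standard invariant domain of polynomials in a, a^dagger). *)
From HB Require Import structures.
From mathcomp Require Import all_boot all_order all_algebra.
From mathcomp Require Import reals.
From mathcomp Require Import complex.
Set Implicit Arguments. Unset Strict Implicit. Unset Printing Implicit Defensive.
Import Order.TTheory GRing.Theory Num.Theory.
Local Open Scope ring_scope.
Local Open Scope complex_scope.

Section Fock.
Variable R : realType.
Local Notation C := R[i].

Section Ops.
Variable B : eqType.

(* a vector of the algebraic span of the basis: a formal finite sum sum_j c_j |x_j> *)
Definition vec := seq (C * B).
(* an (unbounded, densely defined) operator, given by its action on basis vectors *)
Definition op := B -> vec.

Definition vcoef (v : vec) (x : B) : C := \sum_(p <- v | p.2 == x) p.1.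
Definition melem (A : op) (x y : B) : C := vcoef (A y) x.

Definition applyo (A : op) (v : vec) : vec :=
  flatten [seq [seq (p.1 * q.1, q.2) | q <- A p.2] | p <- v].
Definition compo (A B' : op) : op := fun y => applyo A (B' y).
Definition addo (A B' : op) : op := fun y => A y ++ B' y.
Definition scaleo (c : C) (A : op) : op :=
  fun y => [seq (c * q.1, q.2) | q <- A y].
Definition subo (A B' : op) : op := addo A (scaleo (-1) B').
Definition ido : op := fun y => [:: (1, y)].
Definition zeroo : op := fun _ => [::].
Definition expo (A : op) (n : nat) : op := iter n (compo A) ido.

(* (rho A)(x,x) = sum_y rho(x,y) <y|A|x>, for a kernel rho given by its
   matrix elements rho x y = <x|rho|y> *)
Definition diag_term (rho : B -> B -> C) (A : op) (x : B) : C :=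
  \sum_(q <- A x) rho x q.2 * q.1.

Definition abs_summable (f : B -> C) : Prop :=
  exists Bd : C, forall s : seq B, uniq s -> \sum_(x <- s) `|f x| <= Bd.

Definition has_sum (f : B -> C) (S : C) : Prop :=
  forall eps : C, 0 < eps -> exists s0 : seq B,
    forall s : seq B, uniq s -> {subset s0 <= s} ->
      `|\sum_(x <- s) f x - S| < eps.

Definition density (rho : B -> B -> C) : Prop :=
  [/\ forall x y, rho y x = (rho x y)^*,
      forall v : vec, 0 <= \sum_(p <- v) \sum_(q <- v) (p.1)^* * q.1 * rho p.2 q.2
    & has_sum (fun x => rho x x) 1].

Definition expect_finite (rho : B -> B -> C) (A : op) : Prop :=
  abs_summable (diag_term rho A).
Definition expect_is (rho : B -> B -> C) (A : op) (e : C) : Prop :=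
  has_sum (diag_term rho A) e.
End Ops.

Variable N : nat.
Definition occ := {ffun 'I_N -> nat}.          (* occupation numbers *)
Definition vac : occ := [ffun => 0%N].

Definition decr (k : 'I_N) (m : occ) : occ := [ffun j => if j == k then (m j).-1 else m j].
Definition incr (k : 'I_N) (m : occ) : occ := [ffun j => if j == k then (m j).+1 else m j].

Definition ann (k : 'I_N) : op occ := fun m =>
  if m k is 0%N then [::] else [:: ((Num.sqrt (m k)%:R)%:C, decr k m)].
Definition cre (k : 'I_N) : op occ := fun m =>
  [:: ((Num.sqrt (m k).+1%:R)%:C, incr k m)].

Definition letter := ('I_N * bool)%type.
Definition letter_op (l : letter) : op occ := if l.2 then cre l.1 else ann l.1.
Definition word_op (w : seq letter) : op occ := foldr (fun l A => compo (letter_op l) A) (@ido _) w.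
Definition opoly := seq (C * seq letter).
Definition poly_op (P : opoly) : op occ :=
  foldr (fun t A => addo (scaleo t.1 (word_op t.2)) A) (@zeroo _) P.
Definition poly_deg_le (P : opoly) (n : nat) : bool := all (fun t => size t.2 <= n)%N P.

Definition joint := (occ * occ)%type.
Definition liftA (A : op occ) : op joint := fun x => [seq (q.1, (q.2, x.2)) | q <- A x.1].
Definition liftB (A : op occ) : op joint := fun x => [seq (q.1, (x.1, q.2)) | q <- A x.2].
Definition a_ (k : 'I_N) := liftA (ann k).
Definition ad_ (k : 'I_N) := liftA (cre k).
Definition b_ (k : 'I_N) := liftB (ann k).
Definition bd_ (k : 'I_N) := liftB (cre k).

Definition sumo (F : 'I_N -> op joint) : op joint := \big[@addo _/@zeroo _]_(k < N) F k.

Definition with_LO_vacuum (rho : occ -> occ -> C) : joint -> joint -> C :=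
  fun x y => rho x.1 y.1 * (x.2 == vac)%:R * (y.2 == vac)%:R.

Definition quad (alpha : 'I_N -> C) : op joint :=
  sumo (fun k => scaleo (- 'i) (subo (scaleo (alpha k) (ad_ k)) (scaleo (alpha k)^* (a_ k)))).

(* BBP homodyne operator, from the outgoing modes c_k, d_k *)
Definition beta (alpha : 'I_N -> C) (omega : 'I_N -> R) (k : 'I_N) : C :=
  - 'i * alpha k / (omega k)%:C.
Definition isq2 : C := ((Num.sqrt 2)^-1)%:C.
Definition c_ alpha omega (delta : R) (k : 'I_N) : op joint :=
  scaleo isq2 (addo (addo (a_ k) (b_ k)) (scaleo (beta alpha omega k / delta%:C) (@ido _))).
Definition cd_ alpha omega (delta : R) (k : 'I_N) : op joint :=
  scaleo isq2 (addo (addo (ad_ k) (bd_ k)) (scaleo ((beta alpha omega k)^* / delta%:C) (@ido _))).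
Definition d_ alpha omega (delta : R) (k : 'I_N) : op joint :=
  scaleo isq2 (subo (subo (a_ k) (b_ k)) (scaleo (beta alpha omega k / delta%:C) (@ido _))).
Definition dd_ alpha omega (delta : R) (k : 'I_N) : op joint :=
  scaleo isq2 (subo (subo (ad_ k) (bd_ k)) (scaleo ((beta alpha omega k)^* / delta%:C) (@ido _))).
Definition quad_delta alpha omega (delta : R) : op joint :=
  scaleo delta%:C (sumo (fun k => scaleo (omega k)%:C
     (subo (compo (cd_ alpha omega delta k) (c_ alpha omega delta k))
           (compo (dd_ alpha omega delta k) (d_ alpha omega delta k))))).
End Fock.

(* Main.v *)
Require Import Defs.
From HB Require Import structures.
From mathcomp Require Import all_boot all_order all_algebra.
From mathcomp Require Import reals.
From mathcomp Require Import complex.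
From mathcomp Require Import classical_sets.
From mathcomp Require Import ring lra.
Set Implicit Arguments. Unset Strict Implicit. Unset Printing Implicit Defensive.
Import Order.TTheory GRing.Theory Num.Theory.
Local Open Scope ring_scope.
Local Open Scope complex_scope.
Local Notation Re := (@complex.Re _).
Local Notation Im := (@complex.Im _).

Section Gen.
Variable R : realType.
Local Notation C := R[i].

Section Pair.
Variable K : eqType.
Implicit Types (v : vec R K) (G : K -> C).

Definition psum v G : C := \sum_(p <- v) p.1 * G p.2.

Lemma vcoefE v x : vcoef v x = psum v (fun z => (z == x)%:R).
Proof.
rewrite /vcoef /psum big_mkcond; apply: eq_bigr => p _.
by case: eqP => _; rewrite ?mulr1 ?mulr0.
Qed.

Lemma psum_vcoef v G D : uniq D -> {subset [seq p.2 | p <- v] <= D} ->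
  psum v G = \sum_(y <- D) vcoef v y * G y.
Proof.
move=> uD sD.
transitivity (\sum_(y <- D) \sum_(p <- v) p.1 * (p.2 == y)%:R * G y); last first.
  by apply: eq_bigr => y _; rewrite vcoefE /psum big_distrl.
rewrite exchange_big /psum [LHS]big_seq [RHS]big_seq; apply: eq_bigr => p pv.
have pD : p.2 \in D by apply: sD; apply: map_f.
rewrite (bigD1_seq p.2) //= eqxx mulr1 big1 ?addr0 // => y /negbTE.
by rewrite eq_sym => ->; rewrite mulr0 mul0r.
Qed.

Lemma psum_eq v v' G : vcoef v =1 vcoef v' -> psum v G = psum v' G.
Proof.
move=> e; set D := undup ([seq p.2 | p <- v] ++ [seq p.2 | p <- v']).
have uD : uniq D by apply: undup_uniq.
rewrite (@psum_vcoef v G D) ?(@psum_vcoef v' G D) //; last 2 first.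
- by move=> y yv; rewrite mem_undup mem_cat yv orbT.
- by move=> y yv; rewrite mem_undup mem_cat yv.
by apply: eq_bigr => y _; rewrite e.
Qed.

Lemma psum_nil G : psum [::] G = 0. Proof. by rewrite /psum big_nil. Qed.
Lemma psum_cons p v G : psum (p :: v) G = p.1 * G p.2 + psum v G.
Proof. by rewrite /psum big_cons. Qed.
Lemma psum_cat v v' G : psum (v ++ v') G = psum v G + psum v' G.
Proof. by rewrite /psum big_cat. Qed.
Lemma psum_scale c v G : psum [seq (c * q.1, q.2) | q <- v] G = c * psum v G.
Proof. by rewrite /psum big_map big_distrr; apply: eq_bigr => q _ /=; rewrite mulrA. Qed.
Lemma psumZ v G a : psum v (fun z => a * G z) = a * psum v G.
Proof. by rewrite /psum big_distrr; apply: eq_bigr => q _ /=; rewrite mulrCA. Qed.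
Lemma psumD v G G' : psum v (fun z => G z + G' z) = psum v G + psum v G'.
Proof. by rewrite /psum -big_split; apply: eq_bigr => q _ /=; rewrite mulrDr. Qed.
Lemma psum0 v : psum v (fun _ => 0) = 0.
Proof. by rewrite /psum big1 // => q _; rewrite mulr0. Qed.
Lemma psum_ext v G G' : G =1 G' -> psum v G = psum v G'.
Proof. by move=> e; apply: eq_bigr => q _; rewrite e. Qed.
Lemma psum_ext_in v G G' : {in [seq p.2 | p <- v], G =1 G'} -> psum v G = psum v G'.
Proof.
move=> e; rewrite /psum big_seq [RHS]big_seq; apply: eq_bigr => q qv.
by rewrite e // map_f.
Qed.

Lemma psum_applyo (A : op R K) v G :
  psum (applyo A v) G = psum v (fun z => psum (A z) G).
Proof.
rewrite /psum /applyo big_flatten big_map; apply: eq_bigr => p _ /=.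
by have := psum_scale p.1 (A p.2) G; rewrite /psum.
Qed.

Definition eqo (A B : op R K) := forall y, vcoef (A y) =1 vcoef (B y).

Lemma eqo_refl A : eqo A A. Proof. by []. Qed.
Lemma eqo_sym A B : eqo A B -> eqo B A. Proof. by move=> e y x; rewrite e. Qed.
Lemma eqo_trans A B D : eqo A B -> eqo B D -> eqo A D.
Proof. by move=> e1 e2 y x; rewrite e1 e2. Qed.
Lemma eqo_pair A B y G : eqo A B -> psum (A y) G = psum (B y) G.
Proof. by move=> e; apply: psum_eq. Qed.

Lemma psum_compo A B y G : psum (compo A B y) G = psum (B y) (fun z => psum (A z) G).
Proof. exact: psum_applyo. Qed.
Lemma psum_addo A B y G : psum (addo A B y) G = psum (A y) G + psum (B y) G.
Proof. exact: psum_cat. Qed.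
Lemma psum_scaleo c A y G : psum (scaleo c A y) G = c * psum (A y) G.
Proof. exact: psum_scale. Qed.
Lemma psum_ido y G : psum (@ido R K y) G = G y.
Proof. by rewrite psum_cons psum_nil addr0 mul1r. Qed.
Lemma psum_zeroo y G : psum (@zeroo R K y) G = 0.
Proof. exact: psum_nil. Qed.

Lemma eqoP A B : (forall y G, psum (A y) G = psum (B y) G) -> eqo A B.
Proof. by move=> h y x; rewrite !vcoefE h. Qed.

Lemma eqo_compo A A' B B' : eqo A A' -> eqo B B' -> eqo (compo A B) (compo A' B').
Proof.
move=> eA eB; apply: eqoP => y G; rewrite !psum_compo (eqo_pair _ _ eB).
by apply: psum_ext => z; apply: eqo_pair.
Qed.
Lemma eqo_addo A A' B B' : eqo A A' -> eqo B B' -> eqo (addo A B) (addo A' B').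
Proof. by move=> eA eB; apply: eqoP => y G; rewrite !psum_addo (eqo_pair _ _ eA) (eqo_pair _ _ eB). Qed.
Lemma eqo_scaleo c A A' : eqo A A' -> eqo (scaleo c A) (scaleo c A').
Proof. by move=> eA; apply: eqoP => y G; rewrite !psum_scaleo (eqo_pair _ _ eA). Qed.
Lemma eqo_expo A A' n : eqo A A' -> eqo (expo A n) (expo A' n).
Proof. by move=> e; elim: n => [|n IH] //=; apply: eqo_compo. Qed.

Lemma diag_pair (rho : K -> K -> C) A x : diag_term rho A x = psum (A x) (rho x).
Proof. by apply: eq_bigr => q _; rewrite mulrC. Qed.
Lemma eqo_diag rho A B : eqo A B -> diag_term rho A =1 diag_term rho B.
Proof. by move=> e x; rewrite !diag_pair; apply: eqo_pair. Qed.

End Pair.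

Lemma psum_exchange (K1 K2 : eqType) (v : vec R K1) (u : vec R K2) (H : K1 -> K2 -> C) :
  psum v (fun z => psum u (H z)) = psum u (fun w => psum v (fun z => H z w)).
Proof.
rewrite /psum.
under eq_bigr do rewrite big_distrr.
rewrite exchange_big; apply: eq_bigr => q _ /=; rewrite big_distrr.
by apply: eq_bigr => p _ /=; rewrite !mulrA [q.1 * _]mulrC.
Qed.

End Gen.

Section Joint.
Variable R : realType.
Local Notation C := R[i].
Variable N : nat.

Definition JL := ('I_N * bool * bool)%type.
Definition jletter_op (l : JL) : op R (joint N) :=
  if l.2 then liftB (letter_op R l.1) else liftA (letter_op R l.1).
Definition jword_op (w : seq JL) : op R (joint N) :=
  foldr (fun l A => compo (jletter_op l) A) (@ido R _) w.
Definition jpoly := vec R (seq JL).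
Definition jpoly_op (P : jpoly) : op R (joint N) :=
  foldr (fun t A => addo (scaleo t.1 (jword_op t.2)) A) (@zeroo R _) P.
Definition pone : jpoly := [:: (1, [::])].
Definition pmul (P Q : jpoly) : jpoly := [seq (t.1 * s.1, t.2 ++ s.2) | t <- P, s <- Q].
Definition pscale c (P : jpoly) : jpoly := [seq (c * t.1, t.2) | t <- P].
Definition ppow (P : jpoly) n := iter n (pmul P) pone.

Lemma JP P y G : psum (jpoly_op P y) G = psum P (fun w => psum (jword_op w y) G).
Proof.
elim: P => [|t P IH]; first by rewrite psum_nil psum_zeroo.
by rewrite psum_cons /= psum_addo psum_scaleo IH.
Qed.

Lemma jword_cat w1 w2 y G :
  psum (jword_op (w1 ++ w2) y) G = psum (jword_op w2 y) (fun z => psum (jword_op w1 z) G).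
Proof.
elim: w1 G => [|l w1 IH] G /=.
  by apply: psum_ext => z; rewrite psum_ido.
rewrite psum_compo IH; apply: psum_ext => z.
by rewrite psum_compo.
Qed.

Lemma psum_pmul P Q (G : seq JL -> C) :
  psum (pmul P Q) G = psum P (fun t => psum Q (fun s => G (t ++ s))).
Proof.
rewrite /psum /pmul big_allpairs_dep; apply: eq_bigr => t _ /=.
rewrite big_distrr; apply: eq_bigr => s _ /=; by rewrite mulrA.
Qed.

Lemma T_mul P Q : eqo (compo (jpoly_op P) (jpoly_op Q)) (jpoly_op (pmul P Q)).
Proof.
apply: eqoP => y G; rewrite psum_compo.
transitivity (psum (jpoly_op Q y) (fun z => psum P (fun w => psum (jword_op w z) G))).
  by apply: psum_ext => z; rewrite JP.
rewrite JP [RHS]JP psum_pmul.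
transitivity (psum Q (fun s => psum P (fun t => psum (jword_op s y) (fun z => psum (jword_op t z) G)))).
  by apply: psum_ext => s; rewrite psum_exchange.
rewrite psum_exchange; apply: psum_ext => t; apply: psum_ext => s.
by rewrite jword_cat.
Qed.

Lemma T_add P Q : eqo (addo (jpoly_op P) (jpoly_op Q)) (jpoly_op (P ++ Q)).
Proof. by apply: eqoP => y G; rewrite psum_addo !JP psum_cat. Qed.

Lemma T_scale c P : eqo (scaleo c (jpoly_op P)) (jpoly_op (pscale c P)).
Proof. by apply: eqoP => y G; rewrite psum_scaleo !JP psum_scale. Qed.

Lemma T_one : eqo (@ido R _) (jpoly_op pone).
Proof. apply: eqoP => y G; rewrite psum_ido JP /pone psum_cons psum_nil addr0 mul1r /=. by rewrite psum_ido. Qed.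

Lemma T_letter l : eqo (jletter_op l) (jpoly_op [:: (1, [:: l])]).
Proof.
apply: eqoP => y G; rewrite JP psum_cons psum_nil addr0 mul1r /=.
by rewrite psum_compo psum_ido.
Qed.

Lemma T_pow A P n : eqo A (jpoly_op P) -> eqo (expo A n) (jpoly_op (ppow P n)).
Proof.
move=> e; elim: n => [|n IH] /=; first exact: T_one.
apply: eqo_trans (T_mul _ _); exact: eqo_compo.
Qed.

Lemma T_sum (F : 'I_N -> op R (joint N)) (Pk : 'I_N -> jpoly) :
  (forall k, eqo (F k) (jpoly_op (Pk k))) ->
  eqo (sumo F) (jpoly_op (\big[cat/[::]]_(k < N) Pk k)).
Proof.
move=> e; rewrite /sumo.
have := @big_rec2 _ _ (fun A P => eqo A (jpoly_op P)) (@zeroo R _) (@addo _ _) [::] cat (@eqo_refl _ _ _)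
  _ (index_enum 'I_N) xpredT F Pk.
apply => k A P _ eAP.
apply: eqo_trans (T_add _ _); exact: eqo_addo.
Qed.

Definition peq (P Q : jpoly) := vcoef P =1 vcoef Q.

Lemma peq_eqo P Q : peq P Q -> eqo (jpoly_op P) (jpoly_op Q).
Proof. by move=> e; apply: eqoP => y G; rewrite !JP (psum_eq _ e). Qed.

Definition aw (w : seq JL) := [seq l.1 | l <- w & ~~ l.2].
Definition bw (w : seq JL) := [seq l.1 | l <- w & l.2].
Definition vprod (u v : vec R (occ N)) : vec R (joint N) :=
  [seq (p.1 * q.1, (p.2, q.2)) | p <- u, q <- v].

Lemma psum_vprod u v G : psum (vprod u v) G = psum u (fun a => psum v (fun b => G (a, b))).
Proof.
rewrite /psum /vprod big_allpairs_dep; apply: eq_bigr => t _ /=.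
rewrite big_distrr; apply: eq_bigr => s _ /=; by rewrite mulrA.
Qed.

Lemma psum_liftA (La : op R (occ N)) (y : joint N) G : psum (liftA La y) G = psum (La y.1) (fun a => G (a, y.2)).
Proof. by rewrite /psum /liftA big_map. Qed.
Lemma psum_liftB (Lb : op R (occ N)) (y : joint N) G : psum (liftB Lb y) G = psum (Lb y.2) (fun b => G (y.1, b)).
Proof. by rewrite /psum /liftB big_map. Qed.

Lemma factor w y G : psum (jword_op w y) G =
  psum (vprod (word_op R (aw w) y.1) (word_op R (bw w) y.2)) G.
Proof.
elim: w y G => [|l w IH] y G /=.
  by case: y => a b; rewrite psum_ido psum_vprod /= !psum_ido.
rewrite psum_compo IH !psum_vprod.
case: l => [[k d] []] /=.
- rewrite /aw /bw /= -/(aw w) -/(bw w) /=.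
  apply: psum_ext => a; rewrite psum_compo; apply: psum_ext => b.
  by rewrite /jletter_op /= psum_liftB.
- rewrite /aw /bw /= -/(aw w) -/(bw w) /= psum_compo; apply: psum_ext => a.
  rewrite /jletter_op /= [RHS]psum_exchange; apply: psum_ext => b; by rewrite psum_liftA.
Qed.

Variable rho : occ N -> occ N -> C.
Local Notation rhoJ := (with_LO_vacuum rho).

Lemma diag_jword w x : diag_term rhoJ (jword_op w) x =
  (x.2 == vac N)%:R * vcoef (word_op R (bw w) (vac N)) (vac N) *
  diag_term rho (word_op R (aw w)) x.1.
Proof.
rewrite !diag_pair factor psum_vprod.
case: x => m m' /=.
case: (eqVneq m' (vac N)) => [->|ne].
  rewrite mul1r vcoefE -psumZ; apply: psum_ext => a.
  rewrite mulrC -psumZ; apply: psum_ext => b.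
  by rewrite /with_LO_vacuum /= eqxx mulr1.
rewrite !mul0r -[RHS](psum0 (word_op R (aw w) m)); apply: psum_ext => a.
rewrite -[RHS](psum0 (word_op R (bw w) m')); apply: psum_ext => b.
by rewrite /with_LO_vacuum /= (negbTE ne) mulr0 mul0r.
Qed.
End Joint.

Section HS.
Variable R : realType.
Local Notation C := R[i].
Variable K : eqType.
Implicit Types f g : K -> C.

Lemma has_sum_ext f g S : f =1 g -> has_sum f S -> has_sum g S.
Proof.
move=> e h eps /h [s0 hs0]; exists s0 => s us ss.
by under eq_bigr do rewrite -e; apply: hs0.
Qed.

Lemma has_sum_add f g S T : has_sum f S -> has_sum g T ->
  has_sum (fun x => f x + g x) (S + T).
Proof.
move=> hf hg eps e0.
have e2 : 0 < eps / 2%:R by rewrite divr_gt0 // ltr0n.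
have [s1 h1] := hf _ e2; have [s2 h2] := hg _ e2.
exists (s1 ++ s2) => s us ss.
have ss1 : {subset s1 <= s} by move=> x xs; apply: ss; rewrite mem_cat xs.
have ss2 : {subset s2 <= s} by move=> x xs; apply: ss; rewrite mem_cat xs orbT.
rewrite big_split /= (_ : _ - _ = (\sum_(x <- s) f x - S) + (\sum_(x<-s) g x - T)); last by ring.
apply: (le_lt_trans (ler_normD _ _)); rewrite [eps]splitr.
by apply: ltrD; [apply: h1 | apply: h2].
Qed.

Lemma has_sum_scale f S c : has_sum f S -> has_sum (fun x => c * f x) (c * S).
Proof.
move=> hf eps e0; case: (eqVneq c 0) => [->|nc].
  by exists [::] => s _ _; rewrite big1 ?mul0r ?subrr ?normr0 // => x _; rewrite mul0r.
have cp : 0 < `|c| by rewrite normr_gt0.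
have [s0 h0] := hf (eps / `|c|) (divr_gt0 e0 cp).
exists s0 => s us ss; rewrite -big_distrr /= -mulrBr normrM.
by have := h0 s us ss; rewrite ltr_pdivlMr // mulrC.
Qed.

Lemma has_sum_0 : has_sum (fun _ : K => (0 : C)) 0.
Proof.
by move=> eps e0; exists [::] => s _ _; rewrite big1 // subrr normr0.
Qed.

Definition psums (h : K -> R) : set R := fun x => exists s, uniq s /\ x = \sum_(y <- s) h y.

Lemma sum_sub_le (h : K -> R) s0 s : (forall x, 0 <= h x) -> uniq s0 -> uniq s ->
  {subset s0 <= s} -> \sum_(x <- s0) h x <= \sum_(x <- s) h x.
Proof.
move=> h0 u0 u ss.
rewrite [X in _ <= X](bigID (fun x => x \in s0)) /=.
have -> : \sum_(x <- s | x \in s0) h x = \sum_(x <- s0) h x.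
  rewrite -big_filter; apply: perm_big; apply: uniq_perm; rewrite ?filter_uniq //.
  by move=> x; rewrite mem_filter; case: (boolP (x \in s0)) => // /ss ->.
by rewrite lerDl sumr_ge0.
Qed.

Lemma has_sum_pos (h : K -> R) M : (forall x, 0 <= h x) ->
  (forall s, uniq s -> \sum_(y <- s) h y <= M) ->
  has_sum (fun x => (h x)%:C) (sup (psums h))%:C.
Proof.
move=> h0 hM.
have hs : has_sup (psums h).
  split; first by exists 0; exists [::]; rewrite big_nil.
  by exists M => y [s [us ->]]; apply: hM.
move=> [a b]; rewrite ltcE /= => /andP [/eqP -> a0].
have [e [s0 [u0 ->]] he] := sup_adherent a0 hs.
exists s0 => s us ss.
have le1 : \sum_(y <- s) h y <= sup (psums h).
  by apply: sup_upper_bound => //; exists s.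
have le2 := sum_sub_le h0 u0 us ss.
rewrite -raddf_sum /= -raddfB ler0_norm; last by rewrite lecR subr_le0.
by rewrite -raddfN ltcR /=; lra.
Qed.


Definition posp (r : R) := (r + `|r|) / 2%:R.
Definition negp (r : R) := (`|r| - r) / 2%:R.

Lemma posp_bnd r : 0 <= posp r <= `|r|.
Proof. have := ler_norm r; have := ler_norm (- r); rewrite normrN /posp => *; apply/andP; split; lra. Qed.
Lemma negp_bnd r : 0 <= negp r <= `|r|.
Proof. have := ler_norm r; have := ler_norm (- r); rewrite normrN /negp => *; apply/andP; split; lra. Qed.
Lemma pospB r : (posp r)%:C + -1 * (negp r)%:C = r%:C.
Proof. by rewrite mulN1r -raddfB /posp /negp; congr (_%:C); field. Qed.

Definition Sp (h : K -> R) := (sup (psums h))%:C.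
Definition Lsum f : C :=
  (Sp (fun x => posp (Re (f x))) + -1 * Sp (fun x => negp (Re (f x)))) +
  'i * (Sp (fun x => posp (Im (f x))) + -1 * Sp (fun x => negp (Im (f x)))).

Lemma normci : `|'i : C| = 1.
Proof. by rewrite normc_def /= expr0n /= add0r expr1n sqrtr1. Qed.

Lemma Im_le_norm (z : C) : `|Im z|%:C <= `|z|.
Proof.
have := normc_ge_Re (z * 'i); rewrite ReiNIm normrN normrM normci mulr1 //.
Qed.

Lemma abs_bound f : abs_summable f -> exists M, forall s, uniq s ->
  \sum_(x <- s) `|Re (f x)| <= M /\ \sum_(x <- s) `|Im (f x)| <= M.
Proof.
move=> [Bd hB]; exists (Re Bd) => s us.
have hb := hB s us.
have key : forall h : K -> R, (forall x, (h x)%:C <= `|f x|) -> \sum_(x <- s) h x <= Re Bd.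
  move=> h hh.
  have : (\sum_(x <- s) h x)%:C <= Bd.
    rewrite raddf_sum; apply: le_trans hb; apply: ler_sum => x _; exact: hh.
  by rewrite lecE /= => /andP [].
split; apply: key => x; [exact: normc_ge_Re | exact: Im_le_norm].
Qed.

Lemma has_sum_L f : abs_summable f -> has_sum f (Lsum f).
Proof.
move=> /abs_bound [M hM].
have P : forall (g : K -> R) (p : R -> R), (forall r, 0 <= p r <= `|r|) ->
  (forall s, uniq s -> \sum_(x <- s) `|g x| <= M) ->
  has_sum (fun x => (p (g x))%:C) (Sp (fun x => p (g x))).
  move=> g p hp hg; apply: (@has_sum_pos _ M).
    by move=> x; case/andP: (hp (g x)).
  move=> s us; apply: le_trans (hg s us); apply: ler_sum => x _.
  by case/andP: (hp (g x)).
have hR1 := P _ _ posp_bnd (fun s us => proj1 (hM s us)).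
have hR2 := P _ _ negp_bnd (fun s us => proj1 (hM s us)).
have hI1 := P _ _ posp_bnd (fun s us => proj2 (hM s us)).
have hI2 := P _ _ negp_bnd (fun s us => proj2 (hM s us)).
have := has_sum_add (has_sum_add hR1 (has_sum_scale (-1) hR2))
                    (has_sum_scale 'i (has_sum_add hI1 (has_sum_scale (-1) hI2))).
apply: has_sum_ext => x /=.
by rewrite !pospB [RHS]complexE.
Qed.

End HS.

Lemma has_sum_slice (R : realType) (K1 K2 : eqType) (v0 : K2) (g : K1 -> R[i]) S :
  has_sum g S -> has_sum (fun x : K1 * K2 => (x.2 == v0)%:R * g x.1) S.
Proof.
move=> hg eps e0; have [s0 h0] := hg eps e0.
exists [seq (a, v0) | a <- s0] => s us ss.
have -> : \sum_(x <- s) (x.2 == v0)%:R * g x.1 =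
          \sum_(a <- [seq x.1 | x <- s & x.2 == v0]) g a.
  rewrite big_map big_filter [RHS]big_mkcond; apply: eq_bigr => x _.
  by case: (x.2 == v0); rewrite ?mul1r ?mul0r.
apply: h0.
  rewrite map_inj_in_uniq ?filter_uniq // => x y.
  rewrite !mem_filter => /andP [/eqP ex _] /andP [/eqP ey _] exy.
  by case: x y ex ey exy => a b [c d] /= -> ->  ->.
move=> a a0; apply/mapP; exists (a, v0) => //.
by rewrite mem_filter eqxx /=; apply: ss; apply: map_f.
Qed.

Lemma abs_summable_ext (R : realType) (K : eqType) (f g : K -> R[i]) :
  f =1 g -> abs_summable f -> abs_summable g.
Proof. by move=> e [Bd h]; exists Bd => s us; under eq_bigr do rewrite -e; apply: h. Qed.


Section Alg.
Variable R : realType.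
Local Notation C := R[i].
Variable N : nat.
Local Notation jpoly := (jpoly R N).
Implicit Types P Q : jpoly.

Lemma psum_pone (G : seq (JL N) -> C) : psum (pone R N) G = G [::].
Proof. by rewrite psum_cons psum_nil addr0 mul1r. Qed.

Lemma psum_sum (K : eqType) (v : vec R K) m (F : 'I_m -> K -> C) :
  psum v (fun z => \sum_(j < m) F j z) = \sum_(j < m) psum v (F j).
Proof.
rewrite /psum; under eq_bigr do rewrite big_distrr.
by rewrite exchange_big.
Qed.

Lemma pmul_nil P : pmul P [::] = [::].
Proof. by elim: P. Qed.

Lemma peq_pmul P P' Q Q' : peq P P' -> peq Q Q' -> peq (pmul P Q) (pmul P' Q').
Proof.
move=> eP eQ w; rewrite !vcoefE !psum_pmul (psum_eq _ eP).
by apply: psum_ext => t; apply: psum_eq.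
Qed.

Lemma peq_ppow P P' n : peq P P' -> peq (ppow P n) (ppow P' n).
Proof. by move=> e; elim: n => [|n IH] //=; apply: peq_pmul. Qed.

Lemma aw_cat (u v : seq (JL N)) : aw (u ++ v) = aw u ++ aw v.
Proof. by rewrite /aw filter_cat map_cat. Qed.
Lemma bw_cat (u v : seq (JL N)) : bw (u ++ v) = bw u ++ bw v.
Proof. by rewrite /bw filter_cat map_cat. Qed.

Lemma all_pmul (p1 p2 p3 : pred (seq (JL N))) P Q :
  all (fun t => p1 t.2) P -> all (fun t => p2 t.2) Q ->
  (forall u v, p1 u -> p2 v -> p3 (u ++ v)) -> all (fun t => p3 t.2) (pmul P Q).
Proof.
move=> /allP hP /allP hQ h; apply/allP => x /allpairsP [[t s] [tP sQ ->]] /=.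
exact: h (hP _ tP) (hQ _ sQ).
Qed.

Variables A B : jpoly.

Fixpoint Rn n j : jpoly :=
  match n with
  | 0 => if j is 0 then pone R N else [::]
  | n'.+1 => pmul A (Rn n' j) ++ (if j is j'.+1 then pmul B (Rn n' j') else [::])
  end.

Lemma Rn_big n j : (n < j)%N -> Rn n j = [::].
Proof.
elim: n j => [|n IH] [|j] //= lt.
by rewrite !IH ?pmul_nil // ltnW.
Qed.

Lemma expand (d : C) n G :
  psum (ppow (A ++ pscale d B) n) G = \sum_(j < n.+1) d ^+ j * psum (Rn n j) G.
Proof.
elim: n G => [|n IH] G /=.
  by rewrite big_ord_recl big_ord0 addr0 expr0 mul1r.
rewrite psum_pmul.
transitivity (psum (A ++ pscale d B) (fun t => \sum_(j < n.+1) d ^+ j * psum (Rn n j) (fun s => G (t ++ s)))).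
  by apply: psum_ext => t; rewrite IH.
rewrite psum_cat psum_scale !psum_sum.
have hA : forall (X : jpoly) j, psum X (fun z => d ^+ j * psum (Rn n j) (fun s => G (z ++ s))) =
    d ^+ j * psum (pmul X (Rn n j)) G.
  by move=> X j; rewrite psum_pmul -psumZ.
rewrite (eq_bigr _ (fun (j : 'I_n.+1) _ => hA A j)).
rewrite (eq_bigr _ (fun (j : 'I_n.+1) _ => hA B j)).
rewrite big_distrr /=.
rewrite [RHS](eq_bigr (fun j : 'I_n.+2 => d ^+ j * psum (pmul A (Rn n j)) G +
   d ^+ j * (if nat_of_ord j is j'.+1 then psum (pmul B (Rn n j')) G else 0))); last first.
  move=> [j jl] _; case: j jl => [|j] jl /=; rewrite psum_cat -mulrDr //.
  by rewrite psum_nil.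
rewrite big_split /= [X in _ = X + _]big_ord_recr /= Rn_big // pmul_nil psum_nil mulr0 addr0.
rewrite [X in _ = _ + X]big_ord_recl /= mulr0 add0r; congr (_ + _); apply: eq_bigr => j _.
by rewrite mulrA -exprS.
Qed.


Definition nm (a b : nat) : pred (seq (JL N)) := fun u => (size (aw u) == a) && (size (bw u) == b).
Hypothesis hA : all (fun t => nm 1 0 t.2) A.
Hypothesis hB : all (fun t => nm 1 1 t.2) B.

Lemma nm_cat a b a' b' u v : nm a b u -> nm a' b' v -> nm (a + a') (b + b') (u ++ v).
Proof.
move=> /andP [/eqP a1 /eqP b1] /andP [/eqP a2 /eqP b2].
by rewrite /nm aw_cat bw_cat !size_cat a1 b1 a2 b2 !eqxx.
Qed.

Lemma Rn_words n j : all (fun t => nm n j t.2) (Rn n j).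
Proof.
elim: n j => [|n IH] [|j] //=.
  by rewrite cats0; apply: (@all_pmul (nm 1 0) (nm n 0) (nm n.+1 0)) hA (IH 0%N) _ => u v; apply: nm_cat.
rewrite all_cat; apply/andP; split.
  by apply: (@all_pmul (nm 1 0) (nm n j.+1) (nm n.+1 j.+1)) hA (IH j.+1) _ => u v; apply: nm_cat.
by apply: (@all_pmul (nm 1 1) (nm n j) (nm n.+1 j.+1)) hB (IH j) _ => u v; apply: nm_cat.
Qed.

Lemma ppow_words d n : all (fun t => size (aw t.2) == n) (ppow (A ++ pscale d B) n).
Proof.
elim: n => [|n IH] //=.
have H := @all_pmul (fun u => size (aw u) == 1%N) (fun u => size (aw u) == n)
   (fun u => size (aw u) == n.+1) (A ++ pscale d B) (ppow (A ++ pscale d B) n).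
apply: H IH _ => [|u v /eqP a1 /eqP a2]; last by rewrite aw_cat size_cat a1 a2.
rewrite all_cat all_map; apply/andP; split.
  by apply: sub_all hA => t /andP [].
by apply: sub_all hB => t /andP [].
Qed.

End Alg.

Section Conc.
Variable R : realType.
Local Notation C := R[i].
Variable N : nat.
Variable omega : 'I_N -> R.
Variable alpha : 'I_N -> C.
Local Notation jpoly := (jpoly R N).

Definition lt (l : JL N) : jpoly := [:: (1, [:: l])].
Definition la k := lt (k, false, false).
Definition lad k := lt (k, true, false).
Definition lb k := lt (k, false, true).
Definition lbd k := lt (k, true, true).

Definition Aq k : jpoly := pscale (- 'i%R) (pscale (alpha k) (lad k) ++ pscale (-1) (pscale (conjc (alpha k)) (la k))).
Definition Apoly : jpoly := \big[cat/[::]]_(k < N) Aq k.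
Definition Bq k : jpoly := pscale (omega k)%:C (pmul (lad k) (lb k) ++ pmul (lbd k) (la k)).
Definition Bpoly : jpoly := \big[cat/[::]]_(k < N) Bq k.

Section D.
Variable delta : R.
Local Notation bt k := (beta alpha omega k / delta%:C).
Local Notation btc k := (conjc (beta alpha omega k) / delta%:C).
Definition Tc k := pscale (isq2 R) ((la k ++ lb k) ++ pscale (bt k) (pone R N)).
Definition Tcd k := pscale (isq2 R) ((lad k ++ lbd k) ++ pscale (btc k) (pone R N)).
Definition Td k := pscale (isq2 R) ((la k ++ pscale (-1) (lb k)) ++ pscale (-1) (pscale (bt k) (pone R N))).
Definition Tdd k := pscale (isq2 R) ((lad k ++ pscale (-1) (lbd k)) ++ pscale (-1) (pscale (btc k) (pone R N))).
Definition Tqd : jpoly := pscale delta%:C (\big[cat/[::]]_(k < N)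
   pscale (omega k)%:C (pmul (Tcd k) (Tc k) ++ pscale (-1) (pmul (Tdd k) (Td k)))).
End D.

Lemma TA (X Y : op R (joint N)) (P Q : jpoly) : eqo X (jpoly_op P) -> eqo Y (jpoly_op Q) -> eqo (addo X Y) (jpoly_op (P ++ Q)).
Proof. by move=> e1 e2; apply: eqo_trans (T_add _ _); apply: eqo_addo. Qed.
Lemma TS c (X : op R (joint N)) (P : jpoly) : eqo X (jpoly_op P) -> eqo (scaleo c X) (jpoly_op (pscale c P)).
Proof. by move=> e1; apply: eqo_trans (T_scale _ _); apply: eqo_scaleo. Qed.
Lemma TC (X Y : op R (joint N)) (P Q : jpoly) : eqo X (jpoly_op P) -> eqo Y (jpoly_op Q) -> eqo (compo X Y) (jpoly_op (pmul P Q)).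
Proof. by move=> e1 e2; apply: eqo_trans (T_mul _ _); apply: eqo_compo. Qed.
Lemma Ta k : eqo (a_ R k) (jpoly_op (la k)). Proof. exact: (T_letter R (k, false, false)). Qed.
Lemma Tad k : eqo (ad_ R k) (jpoly_op (lad k)). Proof. exact: (T_letter R (k, true, false)). Qed.
Lemma Tb k : eqo (b_ R k) (jpoly_op (lb k)). Proof. exact: (T_letter R (k, false, true)). Qed.
Lemma Tbd k : eqo (bd_ R k) (jpoly_op (lbd k)). Proof. exact: (T_letter R (k, true, true)). Qed.
Lemma T1 : eqo (@ido R _) (jpoly_op (pone R N)). Proof. exact: (@T_one R N). Qed.

Lemma quad_T : eqo (quad alpha) (jpoly_op Apoly).
Proof.
apply: T_sum => k; apply: TS; apply: TA; first by apply: TS; apply: Tad.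
by apply: TS; apply: TS; apply: Ta.
Qed.

Lemma quad_delta_T delta : eqo (quad_delta alpha omega delta) (jpoly_op (Tqd delta)).
Proof.
apply: TS; apply: T_sum => k; apply: TS; apply: TA.
  apply: TC; apply: TS; (apply: TA; [apply: TA | apply: TS; apply: T1]).
  - exact: Tad.
  - exact: Tbd.
  - exact: Ta.
  - exact: Tb.
apply: TS; apply: TC; apply: TS; (apply: TA; [apply: TA | apply: TS; apply: TS; apply: T1]).
- exact: Tad.
- by apply: TS; apply: Tbd.
- exact: Ta.
- by apply: TS; apply: Tb.
Qed.


Lemma psum_bigcat (F : 'I_N -> jpoly) G :
  psum (\big[cat/[::]]_(k < N) F k) G = \sum_(k < N) psum (F k) G.
Proof. exact: (big_morph (fun P => psum P G) (fun P Q => psum_cat P Q G) (psum_nil G)). Qed.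

Lemma psum_pmul_scale c d (P Q : jpoly) G :
  psum (pmul (pscale c P) (pscale d Q)) G = c * d * psum (pmul P Q) G.
Proof.
rewrite !psum_pmul psum_scale -mulrA; congr (_ * _); rewrite -psumZ; apply: psum_ext => t.
by rewrite psum_scale.
Qed.

Lemma isq2_sqr : isq2 R * isq2 R = 2^-1.
Proof.
rewrite /isq2 -rmorphM /= -invfM -expr2 sqr_sqrtr ?ler0n //.
by rewrite fmorphV /= rmorph_nat.
Qed.

Lemma conj_i : conjc ('i%R : C) = - 'i%R.
Proof. by rewrite -complexiE /conjc /=; congr Complex; rewrite oppr0. Qed.

Lemma conjcM (x y : C) : conjc (x * y) = conjc x * conjc y. Proof. exact: rmorphM. Qed.
Lemma conjcN (x : C) : conjc (- x) = - conjc x. Proof. exact: rmorphN. Qed.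
Lemma conjcV (x : C) : conjc (x^-1) = (conjc x)^-1. Proof. exact: conjc_inv. Qed.
Lemma conjcR (x : R) : conjc (x%:C) = x%:C. Proof. exact: conjc_real. Qed.

Lemma beta_conj k : conjc (beta alpha omega k) = 'i%R * conjc (alpha k) / (omega k)%:C.
Proof. by rewrite /beta conjcM conjcM conjcN conj_i conjcV conjcR opprK. Qed.

Lemma Tqd_eq delta G : delta != 0 -> (forall k, omega k != 0) ->
  psum (Tqd delta) G = psum (Apoly ++ pscale delta%:C Bpoly) G.
Proof.
move=> d0 w0.
rewrite /Tqd psum_scale psum_cat psum_scale /Apoly /Bpoly !psum_bigcat.
rewrite !big_distrr -big_split; apply: eq_bigr => k _.
rewrite psum_scale psum_cat psum_scale /Tc /Tcd /Td /Tdd !psum_pmul_scale isq2_sqr.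
rewrite beta_conj /Aq /Bq /la /lb /lad /lbd /lt /pone /= /beta.
rewrite !psum_cons !psum_nil /=.
have dC : delta%:C != 0 by rewrite fmorph_eq0.
have wC : (omega k)%:C != 0 by rewrite fmorph_eq0.
move: (G _) (G _) (G _) (G _) (G _) (G _) (G _) (G _) (G _) => g1 g2 g3 g4 g5 g6 g7 g8 g9.
move: (alpha k) (conjc (alpha k)) => a ac. by field; rewrite dC wC.
Qed.
End Conc.

Section Fin.
Variable R : realType.
Local Notation C := R[i].
Variable N : nat.
Variable rho : occ N -> occ N -> C.
Variable n : nat.
Hypothesis hfin : forall P : opoly R N, poly_deg_le P n -> expect_finite rho (poly_op P).
Local Notation rhoJ := (with_LO_vacuum rho).

Definition cb (w : seq (JL N)) := vcoef (word_op R (bw w) (vac N)) (vac N).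
Definition gE (w : seq (JL N)) : C := cb w * Lsum (diag_term rho (word_op R (aw w))).

Lemma fin_word (u : seq (letter N)) : (size u <= n)%N -> abs_summable (diag_term rho (word_op R u)).
Proof.
move=> su; have := hfin (P := [:: (1, u)]); rewrite /poly_deg_le /= su => /(_ isT).
apply: abs_summable_ext => x; rewrite !diag_pair /=.
by rewrite psum_addo psum_scaleo psum_zeroo addr0 mul1r.
Qed.

Lemma diag_jpoly P x : diag_term rhoJ (jpoly_op P) x =
  psum P (fun w => (x.2 == vac N)%:R * cb w * diag_term rho (word_op R (aw w)) x.1).
Proof.
rewrite diag_pair JP; apply: psum_ext => w.
by rewrite -diag_pair diag_jword.
Qed.

Lemma has_sum_jpoly P : all (fun t => size (aw t.2) <= n)%N P ->
  has_sum (diag_term rhoJ (jpoly_op P)) (psum P gE).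
Proof.
move=> hP.
apply: (@has_sum_ext _ _ (fun x => psum P (fun w => (x.2 == vac N)%:R * cb w *
   diag_term rho (word_op R (aw w)) x.1))); first by move=> x; rewrite diag_jpoly.
elim: P hP => [|t P IH] /=.
  move=> _; apply: (@has_sum_ext _ _ (fun _ => 0)); first by move=> x; rewrite psum_nil.
  by rewrite psum_nil; apply: has_sum_0.
move=> /andP [ht hP].
have h1 := has_sum_slice (vac N) (has_sum_scale (cb t.2) (has_sum_L (fin_word ht))).
have := has_sum_add (has_sum_scale t.1 h1) (IH hP).
rewrite psum_cons; apply: has_sum_ext => x /=; rewrite psum_cons; congr (_ * _ + _).
by rewrite mulrA.
Qed.

Lemma cb_zero w : size (bw w) = 1%N -> cb w = 0.
Proof.
rewrite /cb; case: (bw w) => [|[k b] [|]] //= _.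
rewrite vcoefE psum_compo psum_ido.
case: b => /=.
  rewrite psum_cons psum_nil addr0 /=.
  suff -> : (incr k (vac N) == vac N) = false by rewrite mulr0.
  apply/negbTE/eqP => /(congr1 (fun f : occ N => f k)); rewrite !ffunE eqxx /=.
  by [].
by rewrite /letter_op /= /ann /vac ffunE psum_nil.
Qed.

End Fin.

Lemma peq_of (R : realType) (N : nat) (P Q : jpoly R N) :
  (forall G, psum P G = psum Q G) -> peq P Q.
Proof. by move=> h w; rewrite !vcoefE h. Qed.

Theorem theorem1 (R : realType) (N : nat) (omega : 'I_N -> R) (alpha : 'I_N -> R[i])
    (n : nat) (rho_a : occ N -> occ N -> R[i]) :
  (0 < N)%N -> (forall k, 0 < omega k) -> (0 < n)%N ->
  density rho_a ->
  (forall P : opoly R N, poly_deg_le P n -> expect_finite rho_a (poly_op P)) ->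
  exists K : R, exists delta0 : R, 0 < delta0 /\
    forall delta : R, 0 < delta -> delta < delta0 ->
      exists e_delta e_0 : R[i],
        expect_is (with_LO_vacuum rho_a) (expo (quad_delta alpha omega delta) n) e_delta /\
        expect_is (with_LO_vacuum rho_a) (expo (quad alpha) n) e_0 /\
        `|e_delta - e_0| <= (K * delta ^+ 2)%:C.
Proof.
move=> _ wpos; case: n => // n' _ _ hfin.
set A := Apoly alpha; set B := Bpoly omega.
have hA : all (fun t => nm 1 0 t.2) A.
  rewrite /A /Apoly; apply: (big_rec (fun P => all (fun t => nm 1 0 t.2) P)) => // k P _ hP.
have hB : all (fun t => nm 1 1 t.2) B.
  rewrite /B /Bpoly; apply: (big_rec (fun P => all (fun t => nm 1 1 t.2) P)) => // k P _ hP.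
set g := gE rho_a.
set E := fun j => psum (Rn A B n'.+1 j) g.
have E1 : E 1%N = 0.
  rewrite /E -(psum0 (Rn A B n'.+1 1)); apply: psum_ext_in => w /mapP [t tR ->].
  have /allP /(_ t tR) /andP [_ /eqP b1] := Rn_words hA hB n'.+1 1.
  by rewrite /g /gE cb_zero // mul0r.
have words d : all (fun t => size (aw t.2) <= n'.+1)%N (ppow (A ++ pscale d B) n'.+1).
  by apply: sub_all (ppow_words hA hB d n'.+1) => t /eqP ->.
set K := Re (\sum_(i < n') `|E i.+2|).
have KE : K%:C = \sum_(i < n') `|E i.+2|.
  by rewrite /K RRe_real // ger0_real // sumr_ge0.
exists K, 1; split; first exact: ltr01.
move=> delta d0 d1.
exists (psum (ppow (A ++ pscale delta%:C B) n'.+1) g), (psum (ppow (A ++ pscale 0 B) n'.+1) g).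
split; last split.
- apply: has_sum_ext (has_sum_jpoly hfin (words _)) => x.
  apply: esym; apply: eqo_diag.
  apply: eqo_trans (T_pow _ (quad_delta_T omega alpha delta)) _.
  apply: peq_eqo; apply: peq_ppow; apply: peq_of => G.
  by apply: Tqd_eq => [|k]; rewrite ?lt0r_neq0 // ?wpos // gt_eqF.
- apply: has_sum_ext (has_sum_jpoly hfin (words _)) => x.
  apply: esym; apply: eqo_diag.
  apply: eqo_trans (T_pow _ (quad_T alpha)) _.
  apply: peq_eqo; apply: peq_ppow; apply: peq_of => G.
  by rewrite psum_cat psum_scale mul0r addr0.
rewrite !expand -/E big_ord_recl [X in _ - X]big_ord_recl.
rewrite [X in _ - (_ + X)]big1 => [|i _]; last by rewrite lift0 expr0n mul0r.
rewrite big_ord_recl.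
rewrite (_ : psum (Rn A B n'.+1 (lift ord0 ord0)) g = E 1%N) // E1 mulr0 add0r.
rewrite (_ : delta%:C ^+ ord0 = 1) // (_ : (0 : R[i]) ^+ ord0 = 1) // !mul1r addr0.
rewrite addrAC subrr add0r.
rewrite rmorphM rmorphXn /= KE mulrC big_distrr /=.
apply: le_trans (ler_norm_sum _ _ _) _; apply: ler_sum => i _.
have dC0 : 0 <= delta%:C by rewrite ler0c ltW.
have dC1 : delta%:C <= 1 by rewrite lecR ltW.
rewrite normrM normrX (ger0_norm dC0).
rewrite (_ : psum (Rn A B n'.+1 (lift ord0 (lift ord0 i))) g = E i.+2) //.
rewrite (_ : bump 0 (bump 0 i) = (i + 2)%N); last by rewrite /bump /= !add1n addn2.
apply: ler_wpM2r => //.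
rewrite exprD; apply: ler_piMl; first exact: exprn_ge0.
exact: exprn_ile1.
Qed.
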